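(* Let $G$ and $H$ be Left dead-ends, and assume that no subposition of $G$ or of $H$ has a dominated option. If $G$ and $H$ are equal (i.e. $G \geq H$ and $H \geq G$), then $G \cong H$.
   Context: All games are finite partizan games; $\cong$ denotes identity of game trees. $o(G)$ is the misère outcome class, ordered $\mathscr{L} > \mathscr{N} > \mathscr{R}$, $\mathscr{L} > \mathscr{P} > \mathscr{R}$. A universe is a set of games closed under options, disjunctive sums, conjugates, and forming $\{\mathscr{G}^L\mid\mathscr{G}^R\}$ from nonempty finite subsets of it. For a universe $\mathcal{U}$, $G\geq_\mathcal{U} H$ means $o(G+X)\geq o(H+X)$ for all $X\in\mathcal{U}$. A Left dead-end is a game every subposition of which has no Left option. For Left dead-ends $G,H$, write $G\geq H$ if $G\geq_\mathcal{U} H$ for every universe $\mathcal{U}$. A Right option $G^{R_1}$ of a Left dead-end $G$ is dominated if $G^{R_1}\geq G^{R_2}$ for some other Right option $G^{R_2}$ of $G$. *)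

(* Defs.v *)
From Stdlib Require List.
From mathcomp Require Import all_boot.
Set Implicit Arguments. Unset Strict Implicit. Unset Printing Implicit Defensive.

Inductive game : Type := Node of seq game & seq game.

Definition lefts (G : game) : seq game := let: Node L _ := G in L.
Definition rights (G : game) : seq game := let: Node _ R := G in R.

(* Identity of game trees (options taken as sets, recursively): G ≅ H. *)
Fixpoint ident (G H : game) {struct G} : bool :=
  match G, H with
  | Node L1 R1, Node L2 R2 =>
      [&& all (fun x => has (fun y => ident x y) L2) L1,
          all (fun y => has (fun x => ident x y) L1) L2,
          all (fun x => has (fun y => ident x y) R2) R1 &
          all (fun y => has (fun x => ident x y) R1) R2]
  end.

(* Misere play: a player unable to move wins.
   wins_first G = (Left wins moving first in G, Right wins moving first in G). *)
Fixpoint wins_first (G : game) : bool * bool :=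
  match G with
  | Node L R =>
      ((nilp L) || has (fun p => ~~ p.2) (map wins_first L),
       (nilp R) || has (fun p => ~~ p.1) (map wins_first R))
  end.

Inductive outcome : Type := oL | oN | oP | oR.

Definition outc (G : game) : outcome :=
  match wins_first G with
  | (true, false) => oL
  | (true, true) => oN
  | (false, false) => oP
  | (false, true) => oR
  end.

(* partial order L > N > R, L > P > R (N, P incomparable) *)
Definition outcome_le (a b : outcome) : Prop :=
  match a, b with
  | oR, _ => True
  | _, oL => True
  | oN, oN => True
  | oP, oP => True
  | _, _ => False
  end.

Fixpoint gsum (G H : game) {struct G} : game :=
  let fix sumG (H : game) : game :=
    match G, H with
    | Node GL GR, Node HL HR =>
        Node (map (fun gl => gsum gl H) GL ++ map sumG HL)
             (map (fun gr => gsum gr H) GR ++ map sumG HR)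
    end in
  sumG H.

Fixpoint gconj (G : game) : game :=
  match G with Node L R => Node (map gconj R) (map gconj L) end.

Definition is_option (K G : game) : Prop :=
  List.In K (lefts G) \/ List.In K (rights G).

Definition universe (U : game -> Prop) : Prop :=
  [/\ (forall G K, U G -> is_option K G -> U K),
      (forall G H, U G -> U H -> U (gsum G H)),
      (forall G, U G -> U (gconj G)) &
      (forall A B : seq game, A <> [::] -> B <> [::] ->
         (forall x, List.In x A -> U x) -> (forall x, List.In x B -> U x) ->
         U (Node A B))].

Definition ge_in (U : game -> Prop) (G H : game) : Prop :=
  forall X, U X -> outcome_le (outc (gsum H X)) (outc (gsum G X)).

Inductive subpos : game -> game -> Prop :=
  | subpos_refl G : subpos G G
  | subpos_opt K G' G : is_option G' G -> subpos K G' -> subpos K G.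

Definition left_dead_end (G : game) : Prop :=
  forall K, subpos K G -> lefts K = [::].

(* For Left dead-ends: G >= H iff G >=_U H for every universe U. *)
Definition dge (G H : game) : Prop :=
  forall U, universe U -> ge_in U G H.

Definition dominated_right (G R1 : game) : Prop :=
  exists R2, List.In R2 (rights G) /\ ~~ ident R2 R1 /\ dge R1 R2.

Definition no_dominated_subpos (G : game) : Prop :=
  forall K, subpos K G -> forall R1, List.In R1 (rights K) -> ~ dominated_right K R1.

(* Main.v *)
Require Import Defs.
From mathcomp Require Import all_boot.
From Stdlib Require Import Classical.
Set Implicit Arguments. Unset Strict Implicit. Unset Printing Implicit Defensive.

Lemma In_cat {T} (x:T) s1 s2 : List.In x (s1 ++ s2) <-> List.In x s1 \/ List.In x s2.
Proof. elim: s1 => [|a s IH] /=; [tauto|]. rewrite IH; tauto. Qed.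

Lemma In_map {T U} (f:T->U) y s : List.In y (map f s) <-> exists x, f x = y /\ List.In x s.
Proof.
elim: s => [|a s IH] /=; first by split => [[]|[x [_ []]]].
rewrite IH; split.
- move=> [<-|[x [<- Hx]]]; [by exists a; auto | by exists x; auto].
- move=> [x [<- [->|Hx]]]; [by left| right; exists x; auto].
Qed.

Lemma In_map_f {T U} (f:T->U) x s : List.In x s -> List.In (f x) (map f s).
Proof. move=> H; apply/In_map; exists x; auto. Qed.

Lemma allIn {T} (p:pred T) s : all p s = true <-> (forall x, List.In x s -> p x).
Proof.
elim: s => [|a s IH] /=; first by split.
split.
- move/andP=> [pa /IH H] x [<-|Hx]; auto.
- move=> H; apply/andP; split; [apply: H; auto| apply/IH => x Hx; apply: H; auto].
Qed.

Lemma hasIn {T} (p:pred T) s : has p s = true <-> exists x, List.In x s /\ p x.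
Proof.
elim: s => [|a s IH] /=; first by split => [|[x [[] _]]].
split.
- move/orP=> [pa|/IH [x [Hx px]]]; [exists a; auto| exists x; auto].
- move=> [x [[<-|Hx] px]]; apply/orP; [by left| right; apply/IH; exists x; auto].
Qed.

Lemma hasNIn {T} (p:pred T) s : has p s = false <-> (forall x, List.In x s -> p x = false).
Proof.
split.
- move=> H x Hx; apply/negbTE/negP => px.
  have : has p s = true by apply/hasIn; exists x; auto.
  by rewrite H.
- move=> H; apply/negbTE/negP => /hasIn [x [Hx px]]. by rewrite H in px.
Qed.

Definition game_ind2 (P : game -> Prop)
  (IH : forall L R, (forall x, List.In x L -> P x) -> (forall x, List.In x R -> P x) -> P (Node L R)) :
  forall g, P g :=
  fix F g := match g with Node L R =>
    IH L R
     ((fix aux l : forall x, List.In x l -> P x :=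
        match l return forall x, List.In x l -> P x with
        | [::] => fun x (H : List.In x [::]) => False_ind _ H
        | y :: l' => fun x (H : List.In x (y :: l')) => match H with
             | or_introl e => eq_ind y P (F y) x e
             | or_intror H' => aux l' x H' end
        end) L)
     ((fix aux l : forall x, List.In x l -> P x :=
        match l return forall x, List.In x l -> P x with
        | [::] => fun x (H : List.In x [::]) => False_ind _ H
        | y :: l' => fun x (H : List.In x (y :: l')) => match H with
             | or_introl e => eq_ind y P (F y) x e
             | or_intror H' => aux l' x H' end
        end) R)
  end.

Lemma gsumE a b c d : gsum (Node a b) (Node c d) =
  Node (map (fun g => gsum g (Node c d)) a ++ map (gsum (Node a b)) c)
       (map (fun g => gsum g (Node c d)) b ++ map (gsum (Node a b)) d).
Proof. reflexivity. Qed.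

Lemma wf1E L R : (wins_first (Node L R)).1 = (nilp L || has (fun x => ~~ (wins_first x).2) L).
Proof. by rewrite /= has_map. Qed.
Lemma wf2E L R : (wins_first (Node L R)).2 = (nilp R || has (fun x => ~~ (wins_first x).1) R).
Proof. by rewrite /= has_map. Qed.

Lemma wfE g : wins_first g = ((wins_first g).1, (wins_first g).2).
Proof. by case: (wins_first g). Qed.

Lemma comp_transfer (f : game -> bool) A B :
  (forall a, List.In a A -> exists b, List.In b B /\ f a = f b) ->
  (forall b, List.In b B -> exists a, List.In a A /\ f a = f b) ->
  (nilp A || has f A) = (nilp B || has f B).
Proof.
move=> HA HB.
have nA : nilp A = nilp B.
  case: A HA HB => [|a A] HA HB; case: B HA HB => [|b B] HA HB //.
  - by have [x [[] _]] := HB b (or_introl erefl).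
  - by have [x [[] _]] := HA a (or_introl erefl).
rewrite nA; congr (_ || _).
apply/idP/idP.
- move/hasIn=> [a [Ha fa]]; have [b [Hb e]] := HA a Ha; apply/hasIn; exists b; split=> //; by rewrite -e.
- move/hasIn=> [b [Hb fb]]; have [a [Ha e]] := HB b Hb; apply/hasIn; exists a; split=> //; by rewrite e.
Qed.

Lemma ident_wf x : forall y, ident x y -> forall X, wins_first (gsum x X) = wins_first (gsum y X).
Proof.
elim/game_ind2: x => xL xR IHL IHR [yL yR] /and4P [h1 h2 h3 h4].
move/allIn: h1 => h1; move/allIn: h2 => h2; move/allIn: h3 => h3; move/allIn: h4 => h4.
elim/game_ind2 => XL XR IXL IXR.

rewrite (wfE (gsum (Node xL xR) _)) (wfE (gsum (Node yL yR) _)) !gsumE !wf1E !wf2E.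
congr pair; apply: comp_transfer.
- move=> a /In_cat [/In_map [xl [<- Hxl]]|/In_map [Xl [<- HXl]]].
  + have /hasIn [yl [Hyl id]] := h1 xl Hxl.
    exists (gsum yl (Node XL XR)); split; first by apply/In_cat; left; apply: In_map_f.
    by rewrite (IHL xl Hxl yl id).
  + exists (gsum (Node yL yR) Xl); split; first by apply/In_cat; right; apply: In_map_f.
    by rewrite (IXL Xl HXl).
- move=> b /In_cat [/In_map [yl [<- Hyl]]|/In_map [Xl [<- HXl]]].
  + have /hasIn [xl [Hxl id]] := h2 yl Hyl.
    exists (gsum xl (Node XL XR)); split; first by apply/In_cat; left; apply: In_map_f.
    by rewrite (IHL xl Hxl yl id).
  + exists (gsum (Node xL xR) Xl); split; first by apply/In_cat; right; apply: In_map_f.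
    by rewrite (IXL Xl HXl).
- move=> a /In_cat [/In_map [xl [<- Hxl]]|/In_map [Xl [<- HXl]]].
  + have /hasIn [yl [Hyl id]] := h3 xl Hxl.
    exists (gsum yl (Node XL XR)); split; first by apply/In_cat; left; apply: In_map_f.
    by rewrite (IHR xl Hxl yl id).
  + exists (gsum (Node yL yR) Xl); split; first by apply/In_cat; right; apply: In_map_f.
    by rewrite (IXR Xl HXl).
- move=> b /In_cat [/In_map [yl [<- Hyl]]|/In_map [Xl [<- HXl]]].
  + have /hasIn [xl [Hxl id]] := h4 yl Hyl.
    exists (gsum xl (Node XL XR)); split; first by apply/In_cat; left; apply: In_map_f.
    by rewrite (IHR xl Hxl yl id).
  + exists (gsum (Node xL xR) Xl); split; first by apply/In_cat; right; apply: In_map_f.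
    by rewrite (IXR Xl HXl).
Qed.

Lemma nilpIn {T} (x:T) l : List.In x l -> nilp l = false.
Proof. by case: l. Qed.

Lemma lde_lefts D : left_dead_end D -> lefts D = [::].
Proof. move=> H; exact: H _ (subpos_refl _). Qed.

Lemma lde_right D r : left_dead_end D -> List.In r (rights D) -> left_dead_end r.
Proof. move=> H Hr K HK; apply: H; apply: subpos_opt HK; by right. Qed.

Lemma nds_right D r : no_dominated_subpos D -> List.In r (rights D) -> no_dominated_subpos r.
Proof. move=> H Hr K HK; apply: H; apply: subpos_opt HK; by right. Qed.

Lemma lde_node L R : left_dead_end (Node L R) -> L = [::].
Proof. exact: lde_lefts. Qed.

Lemma left_first_win D Z : left_dead_end D -> lefts Z = [::] -> (wins_first (gsum D Z)).1 = true.
Proof.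
case: D => DL DR; case: Z => ZL ZR dD HZ.
have {HZ} -> : ZL = [::] := HZ.
have -> : DL = [::] := lde_node dD.
by rewrite gsumE wf1E.
Qed.

Definition zero := Node [::] [::].
Definition star := Node [:: zero] [:: zero].
Fixpoint adj g := match g with Node _ R =>
  match R with [::] => star | _ :: _ => Node (map adj R) [:: star] end end.

Lemma adjE L R : R <> [::] -> adj (Node L R) = Node (map adj R) [:: star].
Proof. by case: R. Qed.

Lemma adjP D : left_dead_end D -> wins_first (gsum D (adj D)) = (false, false).
Proof.
elim/game_ind2: D => DL DR _ IHR dD.
have EL := lde_node dD; subst DL.
case: DR IHR dD => [|r0 rs] IHR dD; first by reflexivity.
have nz : (r0 :: rs) <> [::] by [].
have r0in : List.In r0 (r0 :: rs) by left.
move: nz IHR dD r0in; move: (r0 :: rs) => DR nz IHR dD r0in.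
rewrite adjE // wfE gsumE wf1E wf2E.
congr pair; apply/negbTE; rewrite negb_or; apply/andP; split.
- rewrite (@nilpIn _ (gsum (Node [::] DR) (adj r0))) //.
  apply/In_cat; right; do 2 apply: In_map_f; done.
- apply/negbT/hasNIn => x /In_cat [/In_map [? [_ []]] | /In_map [a [<- /In_map [r [<- Hr]]]]].
  apply/negbF.
  have Pr := IHR r Hr (lde_right dD Hr).
  case E: (adj r) => [aL aR].
  rewrite gsumE wf2E; apply/orP; right; apply/hasIn; exists (gsum r (Node aL aR)).
  split; first by apply/In_cat; left; apply: In_map_f.
  by rewrite -E Pr.
- rewrite (@nilpIn _ (gsum (Node [::] DR) star)) //.
  apply/In_cat; right; by left.
- apply/negbT/hasNIn => x /In_cat [/In_map [r [<- Hr]] | [<-|[]]].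
  + apply/negbF.
    have Pr := IHR r Hr (lde_right dD Hr).
    have dr := lde_right dD Hr.
    move: Pr dr Hr; case: r => rL rR Pr dr Hr.
    have ErL := lde_node dr; subst rL.
    rewrite gsumE wf1E; apply/orP; right; apply/hasIn.
    exists (gsum (Node [::] rR) (adj (Node [::] rR))).
    split; first by apply/In_cat; right; apply: In_map_f; apply: In_map_f.
    by rewrite Pr.
  + apply/negbF.
    rewrite /star gsumE wf1E; apply/orP; right; apply/hasIn.
    exists (gsum (Node [::] DR) zero); split; first by apply/In_cat; right; left.
    rewrite /zero gsumE wf2E negb_or; apply/andP; split.
    * rewrite (@nilpIn _ (gsum r0 (Node [::] [::]))) //.
      apply/In_cat; left; exact: In_map_f.
    * apply/negbT/hasNIn => y /In_cat [/In_map [r [<- Hr]] | /In_map [? [_ []]]].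
      apply/negbF; apply: left_first_win => //; exact: lde_right dD Hr.
Qed.

Definition ge_full G H := forall X, outcome_le (outc (gsum H X)) (outc (gsum G X)).

Lemma outcome_leE a b : outcome_le (outc a) (outc b) <->
  (((wins_first a).1 -> (wins_first b).1) /\ ((wins_first b).2 -> (wins_first a).2)).
Proof.
rewrite /outc; case: (wins_first a) => [[] []]; case: (wins_first b) => [[] []] /=;
  split => //; case=> H1 H2; first [by move: (H1 isT) | by move: (H2 isT)].
Qed.

Lemma dge_full G H : dge G H -> ge_full G H.
Proof. move=> D X; apply: (D (fun _ => True)) => //; by split. Qed.

Lemma full_dge G H : ge_full G H -> dge G H.
Proof. move=> F U _ X _; exact: F. Qed.

Lemma outcome_le_trans a b c : outcome_le a b -> outcome_le b c -> outcome_le a c.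
Proof. by case: a; case: b; case: c. Qed.

Lemma ge_trans a b c : ge_full a b -> ge_full b c -> ge_full a c.
Proof. move=> H1 H2 X; exact: outcome_le_trans (H2 X) (H1 X). Qed.

Lemma ident_ge x y : ident x y -> ge_full x y /\ ge_full y x.
Proof.
move=> I; split=> X; rewrite /outc (ident_wf I X); by case: (wins_first _) => [[] []].
Qed.

Lemma distinguish g h : left_dead_end g -> left_dead_end h -> ~ ge_full g h ->
  exists Z, (wins_first (gsum g Z)).2 = true /\ (wins_first (gsum h Z)).2 = false.
Proof.
move=> dg dh nge; apply: NNPP => nex; apply: nge => X; apply/outcome_leE; split.
- move=> h1. case E: (wins_first (gsum g X)).1 => //. exfalso; apply: nex.
  exists (Node [::] [:: X]). split.
  + case: g dg E => gL gR dg E. rewrite gsumE wf2E; apply/orP; right; apply/hasIn.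
    exists (gsum (Node gL gR) X); split; [apply/In_cat; right; by left| by rewrite E].
  + case: h dh h1 => hL hR dh h1. rewrite gsumE wf2E; apply/negbTE; rewrite negb_or; apply/andP; split.
    * rewrite (@nilpIn _ (gsum (Node hL hR) X)) //; apply/In_cat; right; by left.
    * apply/negbT/hasNIn => y /In_cat [/In_map [r [<- Hr]] | [<-|[]]]; apply/negbF.
      -- apply: left_first_win => //; exact: lde_right dh Hr.
      -- exact h1.
- move=> g2. case E: (wins_first (gsum h X)).2 => //. exfalso; apply: nex; exists X; by rewrite g2 E.
Qed.

Lemma collect (l : seq game) (Q : game -> Prop) (P : game -> game -> Prop) :
  (forall h, List.In h l -> exists Z, Q Z /\ P h Z) ->
  exists Zs, (forall Z, List.In Z Zs -> Q Z) /\ (forall h, List.In h l -> exists Z, List.In Z Zs /\ P h Z).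
Proof.
elim: l => [|a l IH] H; first by exists [::]; split.
have [Za [QZa PZa]] := H a (or_introl erefl).
have [Zs [HQ HP]] := IH (fun h Hh => H h (or_intror Hh)).
exists (Za :: Zs); split.
- move=> Z [<-|HZ]; auto.
- move=> h [<-|Hh]; first by exists Za; split; auto; left.
  have [Z [HZ PZ]] := HP h Hh; exists Z; split; auto; by right.
Qed.

Lemma key G H g : left_dead_end G -> left_dead_end H -> ge_full G H -> List.In g (rights G) ->
  exists h, List.In h (rights H) /\ ge_full g h.
Proof.
move=> dG dH ge Hg; apply: NNPP => Hno.
have dg := lde_right dG Hg.
have [Zs [HQ HP]] : exists Zs, (forall Z, List.In Z Zs -> (wins_first (gsum g Z)).2 = true) /\
   (forall h, List.In h (rights H) -> exists Z, List.In Z Zs /\ (wins_first (gsum h Z)).2 = false).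
  apply: collect => h Hh. apply: distinguish => //; first exact: lde_right dH Hh.
  move=> gh; apply: Hno; exists h; auto.
have g1 : (wins_first (gsum g (Node (Node [::] [:: adj g] :: Zs) [:: zero]))).1 = false.
  move: (adjP dg) HQ; case: g dg {Hg Hno} => gL gR dg Pg HQ.
  have EL := lde_node dg; subst gL.
  rewrite gsumE wf1E; apply/negbTE; rewrite negb_or; apply/andP; split; first by [].
  apply/negbT/hasNIn => y /In_cat [/In_map [? [_ []]] | /In_map [Z [<- [<- | HZ]]]]; apply/negbF.
  + rewrite gsumE wf2E; apply/orP; right; apply/hasIn.
    exists (gsum (Node [::] gR) (adj (Node [::] gR))); split; [apply/In_cat; right; by left | by rewrite Pg].
  + exact: HQ.
have := ge (Node (Node [::] [:: adj g] :: Zs) [:: zero]); rewrite outcome_leE => [[_ H2]].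
have G2 : (wins_first (gsum G (Node (Node [::] [:: adj g] :: Zs) [:: zero]))).2 = true.
  case: G dG Hg {ge H2 Hno} => GL GR dG Hg.
  rewrite gsumE wf2E; apply/orP; right; apply/hasIn.
  exists (gsum g (Node (Node [::] [:: adj g] :: Zs) [:: zero])); split; last by rewrite g1.
  apply/In_cat; left; exact: In_map_f Hg.
have H2' : (wins_first (gsum H (Node (Node [::] [:: adj g] :: Zs) [:: zero]))).2 = false.
  case: H dH HP {ge H2 Hno} => HL HR dH HP.
  rewrite gsumE wf2E; apply/negbTE; rewrite negb_or; apply/andP; split.
  - rewrite (@nilpIn _ (gsum (Node HL HR) zero)) //; apply/In_cat; right; by left.
  - apply/negbT/hasNIn => y /In_cat [/In_map [h [<- Hh]] | [<-|[]]]; apply/negbF.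
    + have [Z [HZ PZ]] := HP h Hh.
      have dh := lde_right dH Hh.
      move: PZ dh; case: h {Hh} => hL hR PZ dh.
      rewrite gsumE wf1E; apply/orP; right; apply/hasIn.
      exists (gsum (Node hL hR) Z); split; last by rewrite PZ.
      apply/In_cat; right; apply: In_map_f; by right.
    + apply: left_first_win => //.
by move: (H2 G2); rewrite H2'.
Qed.

Theorem mainTheorem2 (G H : game) :
  left_dead_end G -> left_dead_end H ->
  no_dominated_subpos G -> no_dominated_subpos H ->
  dge G H -> dge H G ->
  ident G H.
Proof.
elim/game_ind2: G H => GL GR _ IHR [HL HR] dG dH nG nH geGH geHG.
have EG := lde_node dG; have EH := lde_node dH; subst GL HL.
have fGH := dge_full geGH; have fHG := dge_full geHG.
apply/and4P; split; [by [] | by [] | apply/allIn => g Hg; apply/hasIn | apply/allIn => h Hh; apply/hasIn].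
- have [h [Hh gh]] := key dG dH fGH Hg.
  have [g' [Hg' hg']] := key dH dG fHG Hh.
  have idg : ident g' g.
    case E: (ident g' g) => //; exfalso.
    apply: (nG (Node [::] GR) (subpos_refl _) g Hg).
    exists g'; split => //; split; [by rewrite E | apply: full_dge; exact: ge_trans gh hg'].
  exists h; split => //.
  apply: IHR => //.
  + exact: lde_right dG Hg.
  + exact: lde_right dH Hh.
  + exact: nds_right nG Hg.
  + exact: nds_right nH Hh.
  + exact: full_dge gh.
  + apply: full_dge; exact: ge_trans hg' (ident_ge idg).1.
- have [g [Hg hg]] := key dH dG fHG Hh.
  have [h' [Hh' gh']] := key dG dH fGH Hg.
  have idh : ident h' h.
    case E: (ident h' h) => //; exfalso.
    apply: (nH (Node [::] HR) (subpos_refl _) h Hh).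
    exists h'; split => //; split; [by rewrite E | apply: full_dge; exact: ge_trans hg gh'].
  exists g; split => //.
  apply: IHR => //.
  + exact: lde_right dG Hg.
  + exact: lde_right dH Hh.
  + exact: nds_right nG Hg.
  + exact: nds_right nH Hh.
  + apply: full_dge; exact: ge_trans gh' (ident_ge idh).1.
  + exact: full_dge hg.
Qed.
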